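(* Let $a\in\mathbb F^*$ and suppose $x^n-a$ lies in the center of $\mathcal R$ (so that $\mathcal S_a$ is a ring). Then $M^\theta_a(\overline{fg})=M^\theta_a(\overline f)\,M^\theta_a(\overline g)$ for all $f,g\in\mathcal R$. Hence $M^\theta_a$ is a ring isomorphism between $\mathcal S_a$ and the subring $M^\theta_a(\mathcal S_a)$ of $\mathbb F^{n\times n}$.
   Context: $\mathbb F$ is a finite field, $\theta\in\mathrm{Aut}(\mathbb F)$, $\mathcal R=\mathbb F[x;\theta]$ the skew polynomial ring (elements $\sum f_ix^i$ with left coefficients, $xb=\theta(b)x$). Fix $n\in\mathbb N$. $\mathcal S_a=\mathcal R/\mathcal R(x^n-a)$, $\overline f$ the coset of $f$. $\mathfrak v_a:\mathcal S_a\to\mathbb F^n$ is the inverse of $(c_0,\dots,c_{n-1})\mapsto\overline{\sum_{i=0}^{n-1}c_ix^i}$. The map $M^\theta_a:\mathcal S_a\to\mathbb F^{n\times n}$ sends $\overline f$ to the matrix whose row with index $i$ ($0\le i\le n-1$) is $\mathfrak v_a(\overline{x^if})$. *)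

(* Defs.v *)
From HB Require Import structures.
From mathcomp Require Import all_boot all_order all_algebra all_field.
Set Implicit Arguments. Unset Strict Implicit. Unset Printing Implicit Defensive.
Import GRing.Theory.
Local Open Scope ring_scope.

(* Skew polynomial ring F[x; theta]: an element sum_i f_i x^i (left
   coefficients) is represented by the polynomial p : {poly F} with
   p`_i = f_i.  Only the multiplication differs: x b = theta(b) x. *)

Section Skew.
Variable F : finFieldType.
Variable theta : {rmorphism F -> F}.

(* (sum_i p_i x^i) * q = sum_i p_i x^i q = sum_i p_i (theta^i q) x^i *)
Definition skmul (p q : {poly F}) : {poly F} :=
  \sum_(i < size p) (p`_i *: ('X^i * map_poly (iter i theta) q)).

Definition xna (n : nat) (a : F) : {poly F} := 'X^n - a%:P.

(* One reduction step modulo the left ideal R(x^n - a): cancel the leading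
   term c x^k (k >= n) by subtracting (c x^(k-n)) * (x^n - a). *)
Definition red_step (n : nat) (a : F) (p : {poly F}) : {poly F} :=
  if (size p <= n)%N then p
  else p - skmul (lead_coef p *: 'X^((size p).-1 - n)) (xna n a).

(* Remainder of right division by x^n - a: the unique r of degree < n
   with f - r in R(x^n - a) (each step strictly lowers the size). *)
Definition skrem (n : nat) (a : F) (f : {poly F}) : {poly F} :=
  iter (size f) (red_step n a) f.

Definition vec_a (n : nat) (a : F) (f : {poly F}) : 'rV[F]_n :=
  \row_(j < n) (skrem n a f)`_j.

Definition Mtheta (n : nat) (a : F) (f : {poly F}) : 'M[F]_n :=
  \matrix_(i < n, j < n) (skrem n a (skmul 'X^i f))`_j.

(* f and g have the same coset in S_a = R / R(x^n - a). *)
Definition skcong (n : nat) (a : F) (f g : {poly F}) : Prop :=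
  exists h : {poly F}, f - g = skmul h (xna n a).

End Skew.

(* Main.v *)
Require Import Defs.
From HB Require Import structures.
From mathcomp Require Import all_boot all_order all_algebra all_field.
From mathcomp Require Import zify.
Import GRing.Theory.
Local Open Scope ring_scope.

Section Dev.
Variable F : finFieldType.
Variable theta : {rmorphism F -> F}.
Local Notation sk := (skmul theta).
Local Notation Ti i := (map_poly (iter i theta)).

Fixpoint iterm (i : nat) : {rmorphism F -> F} :=
  if i is i'.+1 then (theta \o iterm i' : {rmorphism F -> F})
  else (idfun : {rmorphism F -> F}).
Lemma itermE i x : iterm i x = iter i theta x.
Proof. by elim: i => //= i ->. Qed.
Lemma TiE i (p : {poly F}) : Ti i p = map_poly (iterm i) p.
Proof. by apply: eq_map_poly => x; rewrite itermE. Qed.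
Lemma TiD i (p q : {poly F}) : Ti i (p + q) = Ti i p + Ti i q.
Proof. by rewrite !TiE rmorphD. Qed.
Lemma TiB i (p q : {poly F}) : Ti i (p - q) = Ti i p - Ti i q.
Proof. by rewrite !TiE rmorphB. Qed.
Lemma TiM i (p q : {poly F}) : Ti i (p * q) = Ti i p * Ti i q.
Proof. by rewrite !TiE rmorphM. Qed.
Lemma TiZ i c (p : {poly F}) : Ti i (c *: p) = iter i theta c *: Ti i p.
Proof. by rewrite !TiE map_polyZ; congr (_ *: _); exact: itermE. Qed.
Lemma TiXn i k : Ti i ('X^k : {poly F}) = 'X^k.
Proof. by rewrite TiE map_polyXn. Qed.
Lemma TiC i (c : F) : Ti i (c%:P) = (iter i theta c)%:P.
Proof. by rewrite TiE map_polyC; congr (_%:P); exact: itermE. Qed.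
Lemma Ti1 i : Ti i (1 : {poly F}) = 1.
Proof. by rewrite TiE rmorph1. Qed.
Lemma Ti0 (p : {poly F}) : Ti 0 p = p.
Proof. by rewrite map_poly_id. Qed.
Lemma Ti_comp i j (p : {poly F}) : Ti i (Ti j p) = Ti (i + j) p.
Proof. by rewrite !TiE -map_poly_comp; apply: eq_map_poly => x /=; rewrite !itermE iterD. Qed.
Lemma Ti_sum i I (r : seq I) (P : pred I) (G : I -> {poly F}) :
  Ti i (\sum_(k <- r | P k) G k) = \sum_(k <- r | P k) Ti i (G k).
Proof. by rewrite TiE rmorph_sum; apply: eq_bigr => k _; rewrite TiE. Qed.

Lemma skmulE N (p q : {poly F}) : (size p <= N)%N ->
  sk p q = \sum_(i < N) p`_i *: ('X^i * Ti i q).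
Proof.
move=> le; rewrite /skmul (big_ord_widen N (fun i => p`_i *: ('X^i * Ti i q)) le).
rewrite big_mkcond /=; apply: eq_bigr => i _; case: ifP => // /negbT.
by rewrite -leqNgt => h; rewrite nth_default // scale0r.
Qed.

Lemma skmul0l (q : {poly F}) : sk 0 q = 0.
Proof. by rewrite /skmul size_poly0 big_ord0. Qed.

Lemma skmulDl (p q r : {poly F}) : sk (p + q) r = sk p r + sk q r.
Proof.
set N := maxn (size p) (size q).
rewrite !(skmulE N) ?leq_maxl ?leq_maxr ?size_polyD //.
by rewrite -big_split; apply: eq_bigr => i _; rewrite coefD scalerDl.
Qed.

Lemma skmulZl c (p q : {poly F}) : sk (c *: p) q = c *: sk p q.
Proof.
rewrite !(skmulE (size p)) ?size_scale_leq // scaler_sumr.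
by apply: eq_bigr => i _; rewrite coefZ scalerA.
Qed.

Lemma skmulNl (p q : {poly F}) : sk (- p) q = - sk p q.
Proof. by rewrite -scaleN1r skmulZl scaleN1r. Qed.

Lemma skmulBl (p q r : {poly F}) : sk (p - q) r = sk p r - sk q r.
Proof. by rewrite skmulDl skmulNl. Qed.

Lemma skmulDr (p q r : {poly F}) : sk p (q + r) = sk p q + sk p r.
Proof.
rewrite !(skmulE (size p)) // -big_split; apply: eq_bigr => i _.
by rewrite TiD mulrDr scalerDr.
Qed.

Lemma skmul_suml I (rr : seq I) (P : pred I) (G : I -> {poly F}) (q : {poly F}) :
  sk (\sum_(k <- rr | P k) G k) q = \sum_(k <- rr | P k) sk (G k) q.
Proof.
by apply: (big_morph (fun p => sk p q)) => [x y|]; rewrite ?skmulDl ?skmul0l.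
Qed.

Lemma skmulXn i (q : {poly F}) : sk 'X^i q = 'X^i * Ti i q.
Proof.
rewrite (skmulE i.+1) ?size_polyXn // big_ord_recr /= big1 ?add0r.
  by rewrite coefXn eqxx scale1r.
by move=> k _; rewrite coefXn ltn_eqF // scale0r.
Qed.

Lemma skmul1l (q : {poly F}) : sk 1 q = q.
Proof. by rewrite -(expr0 'X) skmulXn Ti0 expr0 mul1r. Qed.

Lemma skmulA_mono i (q r : {poly F}) : sk ('X^i * Ti i q) r = 'X^i * Ti i (sk q r).
Proof.
rewrite (skmulE (size q) q r) // Ti_sum mulr_sumr.
rewrite -{1}(coefK q) poly_def Ti_sum mulr_sumr skmul_suml.
apply: eq_bigr => j _.
rewrite TiZ TiXn -scalerAr -exprD skmulZl skmulXn TiZ TiM TiXn Ti_comp.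
by rewrite -!scalerAr mulrA -exprD.
Qed.

Lemma skmulA (p q r : {poly F}) : sk (sk p q) r = sk p (sk q r).
Proof.
rewrite (skmulE (size p) p q) // (skmulE (size p) p) // skmul_suml.
by apply: eq_bigr => i _; rewrite skmulZl skmulA_mono.
Qed.


Section Red.
Variables (n : nat) (a : F).
Hypothesis n_gt0 : (0 < n)%N.
Local Notation m := (xna n a).
Local Notation rs := (red_step theta n a).
Local Notation rem := (skrem theta n a).

Lemma Ti_m i : Ti i m = 'X^n - (iter i theta a)%:P.
Proof. by rewrite /xna TiB TiXn TiC. Qed.

Lemma skmul_m (h : {poly F}) :
  sk h m = h * 'X^n - \poly_(i < size h) (h`_i * iter i theta a).
Proof.
have hE : h * 'X^n = \sum_(i < size h) h`_i *: 'X^(i+n).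
  rewrite -{1}(coefK h) poly_def mulr_suml; apply: eq_bigr => i _.
  by rewrite -scalerAl -exprD.
rewrite (skmulE (size h)) // poly_def hE -sumrB; apply: eq_bigr => i _.
by rewrite Ti_m mulrBr -exprD scalerBr mulrC mul_polyC scalerA.
Qed.

Lemma size_skmul_m (h : {poly F}) : h != 0 -> size (sk h m) = (n + size h)%N.
Proof.
move=> hnz; rewrite skmul_m size_polyDl; first exact: size_mulXn.
rewrite size_polyN (size_mulXn n hnz).
apply: leq_ltn_trans (size_poly _ _) _; lia.
Qed.

Lemma ideal_small (h : {poly F}) : (size (sk h m) <= n)%N -> sk h m = 0.
Proof.
have [->|hnz] := eqVneq h 0; first by rewrite skmul0l.
rewrite size_skmul_m // => H; exfalso.
have : (0 < size h)%N by rewrite size_poly_gt0.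
lia.
Qed.

Lemma red_step_size (p : {poly F}) : (size (rs p) <= maxn n (size p).-1)%N.
Proof.
rewrite /red_step; case: ifP => [H|/negbT]; first by lia.
rewrite -ltnNge => H.
set d := (size p).-1.
set k := (d - n)%N.
rewrite skmulZl skmulXn Ti_m mulrBr -exprD mulrC mul_polyC.
have kn : (k + n = d)%N by rewrite /k /d; lia.
rewrite kn.
have -> : (maxn n d = d) by lia.
apply/leq_sizeP => j hj.
rewrite coefB coefZ coefB coefZ !coefXn.
have -> : (j == k) = false by apply/negbTE; rewrite /k /d; lia.
rewrite mulr0 subr0.
have [jd|jd] := eqVneq j d.
  by rewrite jd mulr1 -lead_coefE subrr.
rewrite mulr0 subr0 nth_default //; move: hj jd H; rewrite /d => h1 /eqP h2 h3; move: h1 h2 h3; case: (size p) => [|s] /= h1 h2 h3; lia.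
Qed.

Lemma red_step_ideal (p : {poly F}) : exists h, p - rs p = sk h m.
Proof.
rewrite /red_step; case: ifP => _.
  by exists 0; rewrite subrr skmul0l.
by eexists; rewrite opprB addrC subrK.
Qed.

Lemma iter_red k (f : {poly F}) : (size (iter k rs f) <= maxn n (size f - k))%N /\
  exists h, f - iter k rs f = sk h m.
Proof.
elim: k => [|k [IH [h hE]]] /=.
  by split; [rewrite subn0; lia | exists 0; rewrite subrr skmul0l].
split.
  have := red_step_size (iter k rs f).
  move: IH; case: (size (iter k rs f)) => [|s] /= h1 h2; lia.
have [h2 h2E] := red_step_ideal (iter k rs f).
exists (h + h2); rewrite skmulDl -hE -h2E.
by rewrite addrA subrK.
Qed.

Lemma skrem_size (f : {poly F}) : (size (rem f) <= n)%N.
Proof. by have [H _] := iter_red (size f) f; move: H; rewrite /skrem; lia. Qed.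

Lemma skrem_ideal (f : {poly F}) : exists h, f - rem f = sk h m.
Proof. by have [_ H] := iter_red (size f) f; exact: H. Qed.

Lemma skrem_uniq (f r h : {poly F}) : (size r <= n)%N -> f - r = sk h m -> rem f = r.
Proof.
move=> sr hE; have [h' h'E] := skrem_ideal f.
have E : r - rem f = sk (h' - h) m.
  by rewrite skmulBl -h'E -hE opprB [RHS]addrC addrA subrK.
have : sk (h' - h) m = 0.
  apply: ideal_small; rewrite -E.
  apply: leq_trans (size_polyD _ _) _; rewrite size_polyN.
  by rewrite geq_max sr skrem_size.
by rewrite -E => /eqP; rewrite subr_eq0 => /eqP.
Qed.

Lemma skremD (f g : {poly F}) : rem (f + g) = rem f + rem g.
Proof.
have [h1 h1E] := skrem_ideal f; have [h2 h2E] := skrem_ideal g.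
apply: (@skrem_uniq _ _ (h1 + h2)).
  apply: leq_trans (size_polyD _ _) _.
  by have := skrem_size f; have := skrem_size g; lia.
by rewrite skmulDl -h1E -h2E opprD addrACA.
Qed.

Lemma skremZ c (f : {poly F}) : rem (c *: f) = c *: rem f.
Proof.
have [h1 h1E] := skrem_ideal f.
apply: (@skrem_uniq _ _ (c *: h1)).
  by apply: leq_trans (size_scale_leq _ _) _; exact: skrem_size.
by rewrite skmulZl -h1E scalerBr.
Qed.

Lemma skrem0 : rem (0 : {poly F}) = 0.
Proof. by rewrite /skrem size_poly0. Qed.

Lemma skrem_sum I (rr : seq I) (P : pred I) (G : I -> {poly F}) :
  rem (\sum_(k <- rr | P k) G k) = \sum_(k <- rr | P k) rem (G k).
Proof. exact: (big_morph _ skremD skrem0). Qed.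

Lemma skrem_idealE (h : {poly F}) : rem (sk h m) = 0.
Proof. by apply: (@skrem_uniq _ _ h); rewrite ?size_poly0 ?subr0. Qed.

Lemma skrem_small (r : {poly F}) : (size r <= n)%N -> rem r = r.
Proof. by move=> sr; apply: (@skrem_uniq _ _ 0); rewrite ?subrr ?skmul0l. Qed.


Local Notation M := (Mtheta theta n a).

Lemma MthetaE (f : {poly F}) i j : M f i j = (rem (sk 'X^i f))`_j.
Proof. by rewrite mxE. Qed.

Lemma M_add (f g : {poly F}) : M (f + g) = M f + M g.
Proof.
by apply/matrixP => i j; rewrite [RHS]mxE !MthetaE skmulDr skremD coefD.
Qed.

Lemma M_one : M 1 = 1%:M.
Proof.
apply/matrixP => i j; rewrite MthetaE skmulXn Ti1 mulr1 skrem_small.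
  by rewrite coefXn mxE eq_sym.
by rewrite size_polyXn.
Qed.

Lemma M_cong (f g : {poly F}) : M f = M g <-> skcong theta n a f g.
Proof.
split.
  move=> E.
  have Er : rem f = rem g.
    apply/polyP => j.
    have [jn|jn] := ltnP j n.
      have := congr1 (fun A : 'M_n => A (Ordinal n_gt0) (Ordinal jn)) E.
      by rewrite /= !MthetaE expr0 !skmul1l.
    by rewrite !nth_default //; apply: leq_trans (skrem_size _) jn.
  have [h1 h1E] := skrem_ideal f; have [h2 h2E] := skrem_ideal g.
  exists (h1 - h2); rewrite skmulBl -h1E -h2E Er.
  by rewrite opprB addrA subrK.
move=> [h hE]; apply/matrixP => i j; rewrite !MthetaE.
have -> : f = g + sk h m by rewrite -hE addrC subrK.
by rewrite skmulDr -skmulA skremD skrem_idealE addr0.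
Qed.

Hypothesis central : forall f : {poly F}, sk f m = sk m f.

Lemma M_mul (f g : {poly F}) : M (sk f g) = M f *m M g.
Proof.
apply/matrixP => i j; rewrite !mxE.
have [h hE] := skrem_ideal (sk 'X^i f).
set r := rem (sk 'X^i f) in hE *.
have -> : sk 'X^i (sk f g) = sk r g + sk (sk h g) m.
  rewrite -skmulA -[sk 'X^i f](subrK r) hE skmulDl addrC.
  by rewrite !skmulA central.
rewrite skremD skrem_idealE addr0 (skmulE n) ?skrem_size //.
rewrite skrem_sum coef_sum; apply: eq_bigr => k _.
by rewrite !mxE -skmulXn skremZ coefZ.
Qed.

End Red.
End Dev.

Theorem theorem3p6 (F : finFieldType) (theta : {rmorphism F -> F})
  (theta_aut : bijective theta) (n : nat) (n_gt0 : (0 < n)%N) (a : F)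
  (a_nz : a != 0)
  (central : forall f : {poly F},
      skmul theta f (xna n a) = skmul theta (xna n a) f) :
  (forall f g : {poly F},
      Mtheta theta n a (skmul theta f g)
      = Mtheta theta n a f *m Mtheta theta n a g)
  /\ (forall f g : {poly F},
      Mtheta theta n a (f + g) = Mtheta theta n a f + Mtheta theta n a g)
  /\ Mtheta theta n a 1 = 1%:M
  /\ (forall f g : {poly F},
      Mtheta theta n a f = Mtheta theta n a g <-> skcong theta n a f g).
Proof.
split; first exact: (M_mul _ _ _ _ n_gt0 central).
split; first exact: (M_add _ _ _ _ n_gt0).
split; first exact: (M_one _ _ _ _ n_gt0).
exact: (M_cong _ _ _ _ n_gt0).
Qed.
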